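(* Let $\mathcal I$ be an ideal on $\omega$. Then (1) $\mathrm{non}(\mathcal I\text{-p},\mathcal I\text{-}\sigma\text{-u})=\mathfrak b_\sigma(\mathcal I)$; (2) $\mathrm{non}(\mathcal I\text{-p},\mathcal I\text{-qn})=\mathfrak b_s(\mathcal I)$; (3) $\mathrm{non}(\mathcal I\text{-qn},\mathcal I\text{-}\sigma\text{-u})=\mathrm{add}_\omega(\mathcal I)$.
   Context: An ideal on $\omega$ is a family $\mathcal I\subseteq\mathcal P(\omega)$ closed under finite unions and subsets, containing all finite sets, with $\omega\notin\mathcal I$. A real sequence $(a_n)$ is $\mathcal I$-convergent to $0$ if $\{n:|a_n|\ge\varepsilon\}\in\mathcal I$ for all $\varepsilon>0$. For a sequence $(f_n)$ of real functions on a set $X$: $\mathcal I$-p means $(f_n(x))$ is $\mathcal I$-convergent to $0$ for each $x$; $\mathcal I$-u means $\{n:\exists x\in X\,(|f_n(x)|\ge\varepsilon)\}\in\mathcal I$ for each $\varepsilon>0$; $\mathcal I$-$\sigma$-u means $X=\bigcup_{k\in\omega}X_k$ with $(f_n\restriction X_k)$ $\mathcal I$-u convergent to $0$ for each $k$; $\mathcal I$-qn means there is a sequence $(\varepsilon_n)$ of positive reals $\mathcal I$-convergent to $0$ with $\{n:|f_n(x)|\ge\varepsilon_n\}\in\mathcal I$ for each $x$. $\mathcal C(X)$ = continuous real functions on $X$. Normal space = Hausdorff space in which disjoint closed sets have disjoint open neighbourhoods. $(\alpha,\beta)$ is the class of normal spaces $X$ such that for all $(f_n)$ in $\mathcal C(X)$,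 $f_n\to0$ in sense $\alpha$ iff in sense $\beta$; $\mathrm{non}(\alpha,\beta)$ is the least cardinality of a normal space not in $(\alpha,\beta)$, or $\infty$ if none. Cardinals (with $\min\emptyset=\infty$): for ideals $\mathcal I,\mathcal J,\mathcal K$ on $\omega$, let $\widehat{\mathcal P}_{\mathcal I}$ be the set of sequences $(A_n)\in\mathcal I^\omega$ of pairwise disjoint sets, $\mathcal P_{\mathcal I}$ those in $\widehat{\mathcal P}_{\mathcal I}$ with $\bigcup_nA_n=\omega$, and $\mathcal M_{\mathcal I}$ the set of sequences $(E_k)\in\mathcal I^\omega$ with $E_k\subseteq E_{k+1}$ for all $k$. $\mathfrak b_s(\mathcal I,\mathcal J,\mathcal K)=\min\{|\mathcal E|:\mathcal E\subseteq\widehat{\mathcal P}_{\mathcal K}$ and for every $(A_n)\in\mathcal P_{\mathcal J}$ there is $(E_n)\in\mathcal E$ with $\bigcup_{n}(A_{n+1}\cap\bigcup_{i\le n}E_i)\notin\mathcal I\}$; $\mathfrak b_\sigma(\mathcal I,\mathcal J)=\min\{|\mathcal E|:\mathcal E\subseteq\mathcal M_{\mathcal I}$ and for every $(A_n)\in\mathcal M_{\mathcal J}$ there is $(E_n)\in\mathcal E$ with $E_n\not\subseteq A_n$ for infinitely many $n\}$; $\mathrm{add}_\omega(\mathcal I,\mathcal J)=\min\{|\mathcal A|:\mathcal A\subseteq\mathcal I$ and for every $(B_n)\in\mathcal J^\omega$ there is $A\in\mathcal A$ with $A\not\subseteq B_n$ for all $n\}$. $\mathfrak b_s(\mathcal I)=\mathfrak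 b_s(\mathcal I,\mathcal I,\mathcal I)$, $\mathfrak b_\sigma(\mathcal I)=\mathfrak b_\sigma(\mathcal I,\mathcal I)$, $\mathrm{add}_\omega(\mathcal I)=\mathrm{add}_\omega(\mathcal I,\mathcal I)$. *)

(* Defs.v *)
From HB Require Import structures.
From mathcomp Require Import all_boot all_order all_algebra.
From mathcomp Require Import all_classical all_reals all_analysis.
Set Implicit Arguments. Unset Strict Implicit. Unset Printing Implicit Defensive.
Import Order.TTheory GRing.Theory Num.Theory.
Import numFieldNormedType.Exports.
Local Open Scope classical_set_scope.
Local Open Scope ring_scope.

Definition ideal (I : set (set nat)) : Prop :=
  (forall A B, I A -> I B -> I (A `|` B)) /\
  (forall A B, B `<=` A -> I A -> I B) /\
  (forall A, finite_set A -> I A) /\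
  ~ I [set: nat].

Definition Iconv (R : realType) (I : set (set nat)) (a : nat -> R) : Prop :=
  forall eps : R, 0 < eps -> I [set n | eps <= `|a n|].

Definition Ip (R : realType) (I : set (set nat)) (X : Type) (f : nat -> X -> R) :=
  forall x, Iconv I (fun n => f n x).

Definition Iu_on (R : realType) (I : set (set nat)) (X : Type)
    (f : nat -> X -> R) (Y : set X) :=
  forall eps : R, 0 < eps -> I [set n | exists2 x, Y x & eps <= `|f n x|].

Definition Iu (R : realType) (I : set (set nat)) (X : Type) (f : nat -> X -> R) :=
  Iu_on I f [set: X].

Definition Isigmau (R : realType) (I : set (set nat)) (X : Type)
    (f : nat -> X -> R) :=
  exists Xk : nat -> set X, \bigcup_k Xk k = [set: X] /\
    forall k, Iu_on I f (Xk k).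

Definition Iqn (R : realType) (I : set (set nat)) (X : Type) (f : nat -> X -> R) :=
  exists e : nat -> R, (forall n, 0 < e n) /\ Iconv I e /\
    forall x, I [set n | e n <= `|f n x|].

Definition normal_sp (X : topologicalType) : Prop :=
  hausdorff_space X /\
  forall A B : set X, closed A -> closed B -> A `&` B = set0 ->
    exists U V : set X, [/\ open U, open V, A `<=` U, B `<=` V & U `&` V = set0].

Definition in_class (R : realType)
    (alpha beta : forall X : Type, (nat -> X -> R) -> Prop)
    (X : topologicalType) : Prop :=
  forall f : nat -> X -> R, (forall n, continuous (f n)) ->
    (alpha X f <-> beta X f).

(* normal spaces not in (alpha, beta): non(alpha,beta) is the least
   cardinality of such a space *)
Definition bad_space (R : realType)
    (alpha beta : forall X : Type, (nat -> X -> R) -> Prop)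
    (X : topologicalType) : Prop :=
  normal_sp X /\ ~ in_class alpha beta X.

Definition disj_seq (I : set (set nat)) (A : nat -> set nat) : Prop :=
  (forall n, I (A n)) /\ (forall n m, n <> m -> A n `&` A m = set0).
Definition part_seq (I : set (set nat)) (A : nat -> set nat) : Prop :=
  disj_seq I A /\ \bigcup_n A n = [set: nat].
Definition mon_seq (I : set (set nat)) (E : nat -> set nat) : Prop :=
  (forall k, I (E k)) /\ (forall k, E k `<=` E k.+1).

(* witnessing families for b_s(I,J,K), b_sigma(I,J), add_omega(I,J);
   each cardinal is the least size of a witnessing family *)
Definition bs_family (I J K : set (set nat)) (F : set (nat -> set nat)) :=
  (forall E, F E -> disj_seq K E) /\
  forall A, part_seq J A -> exists2 E, F E &
    ~ I (\bigcup_n (A n.+1 `&` \bigcup_(i in [set i | (i <= n)%N]) E i)).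

Definition bsigma_family (I J : set (set nat)) (F : set (nat -> set nat)) :=
  (forall E, F E -> mon_seq I E) /\
  forall A, mon_seq J A -> exists2 E, F E &
    infinite_set [set n | ~ (E n `<=` A n)].

Definition addomega_family (I J : set (set nat)) (F : set (set nat)) :=
  (forall A, F A -> I A) /\
  forall B : nat -> set nat, (forall n, J (B n)) -> exists2 A, F A &
    forall n, ~ (A `<=` B n).

(* "min{|X| : bad X} = min{|F| : wit F}" (with min of empty = infinity),
   expressed without a cardinal type: every member of one class is
   bounded below in cardinality by some member of the other, and
   conversely.  Since cardinals are well ordered this is exactly
   equality of the two minima (including the case both are infinity). *)
Definition min_card_eq (R : realType)
    (alpha beta : forall X : Type, (nat -> X -> R) -> Prop)
    (T : Type) (wit : set T -> Prop) : Prop :=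
  (forall X : topologicalType, bad_space alpha beta X ->
     exists2 F : set T, wit F & (F #<= [set: X])%card) /\
  (forall F : set T, wit F ->
     exists2 X : topologicalType, bad_space alpha beta X & ([set: X] #<= F)%card).

(* Main.v *)
From HB Require Import structures.
Require Import Defs.
From mathcomp Require Import all_boot all_order all_algebra.
From mathcomp Require Import all_classical all_reals all_analysis.
Import Order.TTheory GRing.Theory Num.Theory.
Import numFieldNormedType.Exports.
Local Open Scope classical_set_scope.
Local Open Scope ring_scope.

Lemma least_ex (P : nat -> Prop) m : P m ->
  exists i, (i <= m)%N /\ P i /\ forall j, (j < i)%N -> ~ P j.
Proof.
elim: m {-2}m (leqnn m) => [|m IH] m'.
  rewrite leqn0 => /eqP -> P0; exists 0%N; split => //.
move=> lem' Pm'.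
have [[j [ltj Pj]]|nex] := pselect (exists j, (j < m')%N /\ P j).
  have ljm : (j <= m)%N by rewrite -ltnS; apply: leq_trans ltj lem'.
  have [i [lei [Pi mini]]] := IH j ljm Pj.
  by exists i; split => //; apply: leq_trans lei (ltnW ltj).
exists m'; split => //; split => // j ltj Pj; apply: nex; by exists j.
Qed.

Definition inat (R : realType) (k : nat) : R := (k.+1%:R)^-1.

Lemma inat_gt0 (R : realType) k : 0 < inat R k.
Proof. by rewrite /inat invr_gt0 ltr0n. Qed.

Lemma inat_le (R : realType) k m : (inat R k <= inat R m) = (m <= k)%N.
Proof. by rewrite /inat lef_pV2 ?posrE ?ltr0n // ler_nat ltnS. Qed.

Lemma inat_lt (R : realType) k m : (inat R k < inat R m) = (m < k)%N.
Proof. by rewrite /inat ltf_pV2 ?posrE ?ltr0n // ltr_nat ltnS. Qed.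

Lemma inat_arch (R : realType) (eps : R) : 0 < eps -> exists m, inat R m < eps.
Proof.
move=> e0; exists (Num.truncn (eps^-1)).
rewrite /inat -[X in _ < X]invrK ltf_pV2 ?posrE ?ltr0n ?invr_gt0 //.
exact: truncnS_gt.
Qed.

Lemma fin_bound {A : set nat} : finite_set A -> exists k, forall n, A n -> (n < k)%N.
Proof.
move=> /finite_fsetP [X ->]; exists (\max_(i <- finmap.enum_fset X) i).+1 => n /= Xn.
rewrite ltnS; exact: (@leq_bigmax_seq _ (finmap.enum_fset X) xpredT (fun i : nat => i) n Xn isT).
Qed.

Lemma finI {A : set nat} k : (forall n, A n -> (n < k)%N) -> finite_set A.
Proof. move=> h; apply: (sub_finite_set _ (finite_II k)) => n /h. by []. Qed.

Lemma idS I A B : ideal I -> B `<=` A -> I A -> I B.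
Proof. by case=> _ [h _] BA; apply: h. Qed.

Lemma idU I A B : ideal I -> I A -> I B -> I (A `|` B).
Proof. by case=> h _; apply: h. Qed.

Lemma idF I A : ideal I -> finite_set A -> I A.
Proof. by case=> _ [_ [h _]]; apply: h. Qed.

Lemma idB I (B : nat -> set nat) n : ideal I -> (forall k, (k <= n)%N -> I (B k)) ->
  I [set x | exists2 k, (k <= n)%N & B k x].
Proof.
move=> hI; elim: n => [|n IH] h.
  apply: (@idS I (B 0%N) _ hI); last exact: h.
  by move=> x [k]; rewrite leqn0 => /eqP ->.
apply: (@idS I ([set x | exists2 k, (k <= n)%N & B k x] `|` B n.+1) _ hI).
  move=> x [k]; rewrite leq_eqVlt => /orP [/eqP -> |]; first by right.
  by rewrite ltnS => lek Bx; left; exists k.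
apply: idU => //; [apply: IH => k lek; apply: h; exact: leq_trans lek _ | exact: h].
Qed.

Lemma inat_norm (R : realType) k : `|inat R k| = inat R k.
Proof. by rewrite ger0_norm // ltW // inat_gt0. Qed.

Arguments idS {I A B}.
Arguments inat_arch {R eps}.
Arguments idU {I A B}.
Arguments idF {I A}.
Arguments idB {I B n}.

Lemma mon_le {E : nat -> set nat} : (forall k, E k `<=` E k.+1) ->
  forall {k m}, (k <= m)%N -> E k `<=` E m.
Proof.
move=> h k m /subnK <-; elim: (m - k)%N => [|d IH] //=.
by rewrite addSn; apply: subset_trans IH (h _).
Qed.

Lemma disjE (A B : set nat) m : A `&` B = set0 -> A m -> B m -> False.
Proof. by move=> h Am Bm; have : (A `&` B) m by []; rewrite h. Qed.

Lemma su_p (R : realType) I (X : Type) (f : nat -> X -> R) :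
  ideal I -> Isigmau I f -> Ip I f.
Proof.
move=> hI [Xk [cov hu]] x eps e0.
have : [set: X] x by [].
rewrite -cov => -[k _ xk].
by apply: (idS hI _ (hu k eps e0)) => n /= h; exists x.
Qed.

Lemma qn_p (R : realType) I (X : Type) (f : nat -> X -> R) :
  ideal I -> Iqn I f -> Ip I f.
Proof.
move=> hI [e [epos [ec he]]] x eps e0.
apply: (idS hI _ (idU hI (ec eps e0) (he x))) => n /= h.
have [le|lt] := leP eps (e n); first by left; rewrite ger0_norm // ltW.
by right; apply: le_trans (ltW lt) h.
Qed.

Lemma su_qn (R : realType) I (X : Type) (f : nat -> X -> R) :
  ideal I -> Isigmau I f -> Iqn I f.
Proof.
move=> hI [Xk [cov hu]].
pose B k j := [set n | exists2 x, Xk k x & inat R j <= `|f n x|].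
have BI k j : I (B k j) by apply: hu; exact: inat_gt0.
pose P m j := (m <= j)%N \/ exists2 k, (k <= j)%N & B k j.+1 m.
have QI j : I [set m | P m j].
  apply: (@idS I (`I_j.+1 `|` [set m | exists2 k, (k <= j)%N & B k j.+1 m]) _ hI).
    by move=> m [h|h]; [left; rewrite /= ltnS | right].
  by apply: idU => //; [apply: idF => //; exact: finite_II | apply: idB => // k _].
have hex m : exists h, P m h /\ forall j, (j < h)%N -> ~ P m j.
  have [i [_ [Pi mi]]] := @least_ex (P m) m (or_introl (leqnn m)).
  by exists i.
have [h hh] := choice hex.
have QB M : I [set m | (h m <= M)%N].
  apply: (@idS I [set m | exists2 j, (j <= M)%N & P m j] _ hI); last exact: (@idB I (fun j => [set m | P m j]) M hI (fun j _ => QI j)).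
  by move=> m /= hm; exists (h m) => //; case: (hh m).
exists (fun m => inat R (h m)); split; first by move=> m; exact: inat_gt0.
split.
  move=> eps e0; have [M hM] := inat_arch e0.
  apply: (idS hI _ (QB M)) => m /=; rewrite inat_norm => hm.
  by have := lt_le_trans hM hm; rewrite inat_lt => /ltnW.
move=> x; have : [set: X] x by [].
rewrite -cov => -[k _ xk].
apply: (idS hI _ (QB k)) => m /= hm.
rewrite leqNgt; apply/negP => kh.
case: (hh m) => _ /(_ (h m).-1); apply.
  by rewrite prednK ?ltnSn //; apply: leq_ltn_trans kh.
right; exists k; first by rewrite -ltnS prednK //; apply: leq_ltn_trans kh.
by exists x => //; rewrite prednK //; apply: leq_ltn_trans kh.
Qed.

Lemma lb1 (R : realType) I (X : Type) (f : nat -> X -> R) : ideal I -> Ip I f ->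
  ~ Isigmau I f -> exists2 F, bsigma_family I I F & (F #<= [set: X])%card.
Proof.
move=> hI hp hs.
pose E x k := [set n | inat R k <= `|f n x|].
exists ((fun x => E x) @` setT); last exact: card_image_le.
split.
  move=> _ [x _ <-]; split; first by move=> k; apply: hp; apply: inat_gt0.
  by move=> k n /=; apply: le_trans; rewrite inat_le.
move=> A [AI Amon].
apply: contrapT => nex; apply: hs.
have fin x : finite_set [set n | ~ (E x n `<=` A n)].
  by apply: contrapT => inf; apply: nex; exists (E x) => //; exists x.
have bnd x : exists k, forall n, (k <= n)%N -> E x n `<=` A n.
  have [k hk] := fin_bound (fin x); exists k => n kn; apply: contrapT => h.
  by have := hk n h; rewrite ltnNge kn.
exists (fun k => [set x | forall n, (k <= n)%N -> E x n `<=` A n]); split.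
  by apply/seteqP; split => // x _; have [k hk] := bnd x; exists k.
move=> k eps e0; have [m hm] := inat_arch e0.
apply: (idS hI _ (AI (maxn m k))) => n [x hx hn].
apply: (hx (maxn m k)); first exact: leq_maxr.
rewrite /E /=; apply: le_trans hn; apply: le_trans (ltW hm).
by rewrite inat_le leq_maxl.
Qed.

Lemma lb2 (R : realType) I (X : Type) (f : nat -> X -> R) : ideal I -> Ip I f ->
  ~ Iqn I f -> exists2 F, bs_family I I I F & (F #<= [set: X])%card.
Proof.
move=> hI hp hq.
pose E x i := [set n | inat R i <= `|f n x| /\
   forall j, (j < i)%N -> ~ inat R j <= `|f n x|].
exists ((fun x => E x) @` setT); last exact: card_image_le.
split.
  move=> _ [x _ <-]; split.
    by move=> i; apply: (idS hI _ (hp x _ (inat_gt0 R i))) => n [].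
  move=> i j ij; apply/seteqP; split => // n [[hi1 hi2] [hj1 hj2]].
  have [lt|lt|eq] := ltngtP i j; first exact: hj2 _ lt hi1.
    exact: hi2 _ lt hj1.
  by case: ij.
move=> A [[AI Adisj] Acov].
apply: contrapT => nex; apply: hq.
have hS x : I (\bigcup_n (A n.+1 `&` \bigcup_(i in [set i | (i <= n)%N]) E x i)).
  by apply: contrapT => h; apply: nex; exists (E x) => //; exists x.
have hA m : exists n, A n m.
  by have : [set: nat] m by []; rewrite -Acov => -[n _ h]; exists n.
have [a ha] := choice hA.
exists (fun m => inat R (a m).-1); split; first by move=> m; exact: inat_gt0.
split.
  move=> eps e0; have [M hM] := inat_arch e0.
  apply: (idS hI _ (@idB I A M.+1 hI (fun k _ => AI k))) => m /=.
  rewrite inat_norm => hm; exists (a m) => //.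
  have := lt_le_trans hM hm; rewrite inat_lt => h.
  by case: (a m) h => [|n] //= h; rewrite ltnS ltnW.
move=> x; apply: (idS hI _ (idU hI (AI 0%N) (hS x))) => m /= hm.
case Ea: (a m) hm => [|k] hm; first by left; rewrite -Ea; exact: ha.
right; simpl in hm.
have [i [ik [Pi mi]]] := @least_ex (fun i => inat R i <= `|f m x|) k hm.
exists k => //; split; first by rewrite -Ea; exact: ha.
by exists i => //; split.
Qed.

Lemma lb3 (R : realType) I (X : Type) (f : nat -> X -> R) : ideal I -> Iqn I f ->
  ~ Isigmau I f -> exists2 F, addomega_family I I F & (F #<= [set: X])%card.
Proof.
move=> hI [e [epos [ec he]]] hs.
pose A x := [set n | e n <= `|f n x|].
exists (A @` setT); last exact: card_image_le.
split; first by move=> _ [x _ <-]; exact: he.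
move=> B BI; apply: contrapT => nex; apply: hs.
have hb x : exists k, A x `<=` B k.
  apply: contrapT => h; apply: nex; exists (A x); first by exists x.
  by move=> k hk; apply: h; exists k.
exists (fun k => [set x | A x `<=` B k]); split.
  by apply/seteqP; split => // x _; have [k hk] := hb x; exists k.
move=> k eps e0; apply: (idS hI _ (idU hI (BI k) (ec eps e0))) => n [x hx hn].
have [le|lt] := leP (e n) `|f n x|; first by left; exact: hx.
by right; rewrite /= ger0_norm ?(ltW (epos n)) //; apply: ltW; exact: le_lt_trans hn lt.
Qed.

Definition gspec {R : realType} (E : nat -> set nat) n (r : R) :=
  ((forall k, ~ E k n) /\ r = 0) \/
  exists k, [/\ E k n, forall j, (j < k)%N -> ~ E j n & r = inat R k].

Lemma g_ex (R : realType) :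
  exists g : (nat -> set nat) -> nat -> R, forall E n, gspec E n (g E n).
Proof.
have h : forall p : (nat -> set nat) * nat, exists r : R, gspec p.1 p.2 r.
  case=> E n /=; have [[k Ek]|nk] := pselect (exists k, E k n).
    have [i [_ [Ei mi]]] := @least_ex (fun k => E k n) k Ek.
    by exists (inat R i); right; exists i; split.
  by exists 0; left; split => // k Ek; apply: nk; exists k.
have [g hg] := choice h; exists (fun E n => g (E, n)) => E n; exact: hg (E, n).
Qed.

Definition sigF {T : Type} (F : set T) := {E : T | F E}.
HB.instance Definition _ T (F : set T) := gen_eqMixin (sigF F).
HB.instance Definition _ T (F : set T) := gen_choiceMixin (sigF F).

Lemma ub1 (R : realType) I F : ideal I -> bsigma_family I I F ->
  exists f : nat -> sigF F -> R, Ip I f /\ ~ Isigmau I f.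
Proof.
move=> hI [Fm Fw]; have [g hg] := g_ex R.
exists (fun n x => g (proj1_sig x) n); split.
  case=> E FE eps e0 /=; have [m hm] := inat_arch e0.
  have [EI Emon] := Fm E FE.
  apply: (idS hI _ (EI m)) => n /= hn.
  case: (hg E n) => [[_ g0]|[k [Ek _ gk]]].
    by move: hn; rewrite g0 normr0 leNgt e0.
  rewrite gk inat_norm in hn.
  have : (k <= m)%N by have := lt_le_trans hm hn; rewrite inat_lt => /ltnW.
  by move=> km; exact: (@mon_le E Emon k m km _ Ek).
move=> [Xk [cov hu]].
pose A n := [set n' | exists2 k, (k <= n)%N &
  [set n'' | exists2 x, Xk k x & inat R n <= `|g (proj1_sig x) n''|] n'].
have hmA : mon_seq I A.
  split.
    move=> n; apply: idB => // k _; apply: hu; exact: inat_gt0.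
  move=> n n' [k kn [x xk hx]]; exists k; first exact: leqW.
  by exists x => //; apply: le_trans hx; rewrite inat_le.
have [E FE hE] := Fw A hmA.
apply: hE.
have : [set: sigF F] (exist _ E FE) by [].
rewrite -cov => -[k _ xk].
apply: (@finI _ k) => n hn; rewrite ltnNge; apply/negP => kn; apply: hn => n' En'.
exists k => //; exists (exist _ E FE) => //=.
case: (hg E n') => [[nE _]|[k' [Ek' mk gk]]]; first by case: (nE n).
rewrite gk inat_norm inat_le.
by rewrite leqNgt; apply/negP => /mk.
Qed.

Lemma ub2 (R : realType) I F : ideal I -> bs_family I I I F ->
  exists f : nat -> sigF F -> R, Ip I f /\ ~ Iqn I f.
Proof.
move=> hI [Fd Fw]; have [g hg] := g_ex R.
exists (fun n x => g (proj1_sig x) n); split.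
  case=> E FE eps e0 /=; have [m hm] := inat_arch e0.
  have [EI Edisj] := Fd E FE.
  apply: (idS hI _ (@idB I E m hI (fun k _ => EI k))) => n /= hn.
  case: (hg E n) => [[_ g0]|[k [Ek _ gk]]].
    by move: hn; rewrite g0 normr0 leNgt e0.
  rewrite gk inat_norm in hn; exists k => //.
  by have := lt_le_trans hm hn; rewrite inat_lt => /ltnW.
move=> [e [epos [ec he]]].
pose A n := [set m | inat R n <= e m /\ forall j, (j < n)%N -> ~ inat R j <= e m].
have hpA : part_seq I A.
  split; first split.
  - move=> n; apply: (idS hI _ (ec _ (inat_gt0 R n))) => m [h _] /=.
    by rewrite ger0_norm // ltW.
  - move=> i j ij; apply/seteqP; split => // n [[hi1 hi2] [hj1 hj2]].
    have [lt|lt|eq] := ltngtP i j; first exact: hj2 _ lt hi1.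
      exact: hi2 _ lt hj1.
    by case: ij.
  - apply/seteqP; split => // m _; have [k hk] := inat_arch (epos m).
    have [i [_ [Pi mi]]] := @least_ex (fun i => inat R i <= e m) k (ltW hk).
    by exists i.
have [E FE hE] := Fw A hpA.
have [EI Edisj] := Fd E FE.
apply: hE; apply: (idS hI _ (he (exist _ E FE))) => m /= [n _ [[An1 mn] [i ilen Ei]]].
case: (hg E m) => [[nE _]|[k [Ek mk gk]]]; first by case: (nE i).
have ki : k = i.
  by apply: contrapT => kni; exact: disjE (Edisj _ _ kni) Ek Ei.
rewrite gk inat_norm.
have : ~ inat R n <= e m by apply: mn; exact: ltnSn.
move/negP; rewrite -ltNge => lt; apply: ltW (lt_le_trans lt _).
by rewrite ki inat_le.
Qed.

Lemma ub3 (R : realType) I F : ideal I -> addomega_family I I F ->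
  exists f : nat -> sigF F -> R, Iqn I f /\ ~ Isigmau I f.
Proof.
move=> hI [FI Fw].
exists (fun n x => if `[< proj1_sig x n >] then 1 else 0); split.
  exists (inat R); split; first exact: inat_gt0.
  split.
    move=> eps e0; have [m hm] := inat_arch e0; apply: idF => //.
    apply: (@finI _ m) => n /=; rewrite inat_norm => h.
    by have := lt_le_trans hm h; rewrite inat_lt.
  case=> E FE; apply: (idS hI _ (FI E FE)) => n /=.
  by case: asboolP => // _; rewrite normr0 leNgt inat_gt0.
move=> [Xk [cov hu]].
pose B k := [set n | exists2 x, Xk k x &
  1 <= `|(if `[< proj1_sig x n >] then 1 else 0 : R)|].
have [A FA hA] := Fw B (fun k => hu k 1 ltr01).
have : [set: sigF F] (exist _ A FA) by [].
rewrite -cov => -[k _ xk].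
apply: (hA k) => n An; exists (exist _ A FA) => //=.
by rewrite asboolT // normr1.
Qed.

Lemma disc_normal (T : choiceType) : normal_sp (discrete_topology T).
Proof.
split; first exact: discrete_hausdorff.
by move=> A B _ _ AB; exists A, B; split => //; exact: discrete_open.
Qed.

Lemma disc_cont (T : choiceType) (Y : topologicalType)
  (h : discrete_topology T -> Y) : continuous h.
Proof.
move=> x U /= hU; rewrite nbhs_principalE; apply/principal_filterP.
exact: nbhs_singleton hU.
Qed.

Lemma card_sigF {T : Type} (F : set T) :
  ([set: discrete_topology (sigF F)] #<= F)%card.
Proof.
have inj : {in [set: sigF F] &, injective (@proj1_sig _ _ : sigF F -> T)}.
  move=> [a ha] [b hb] _ _ /= eab; subst b.
  by rewrite (Prop_irrelevance ha hb).
have h : ([set: sigF F] #<= (@proj1_sig _ _ : sigF F -> T) @` setT)%card.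
  by have := inj_card_eq inj; rewrite card_eq_le => /andP [].
have e : (@proj1_sig _ _ : sigF F -> T) @` setT = F.
  apply/seteqP; split => [_ [[E FE] _ <-] //|E FE].
  by exists (exist _ E FE).
rewrite e in h; exact: h.
Qed.

Theorem corollary4p7 (R : realType) (I : set (set nat)) :
  ideal I ->
  min_card_eq (@Ip R I) (@Isigmau R I) (bsigma_family I I) /\
  min_card_eq (@Ip R I) (@Iqn R I) (bs_family I I I) /\
  min_card_eq (@Iqn R I) (@Isigmau R I) (addomega_family I I).
Proof.
move=> hI; split; [|split]; split.
- move=> X [_ nc]; apply: contrapT => H; apply: nc => f _.
  split => [hp|]; last exact: su_p hI.
  by apply: contrapT => hs; apply: H; exact: lb1 hI hp hs.
- move=> F hF; have [f [hp hs]] := ub1 R I F hI hF.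
  exists (discrete_topology (sigF F)); last exact: card_sigF.
  split; first exact: disc_normal.
  by move=> /(_ f (fun n => @disc_cont _ _ (f n))) h; apply: hs; apply/h.
- move=> X [_ nc]; apply: contrapT => H; apply: nc => f _.
  split => [hp|]; last exact: qn_p hI.
  by apply: contrapT => hs; apply: H; exact: lb2 hI hp hs.
- move=> F hF; have [f [hp hs]] := ub2 R I F hI hF.
  exists (discrete_topology (sigF F)); last exact: card_sigF.
  split; first exact: disc_normal.
  by move=> /(_ f (fun n => @disc_cont _ _ (f n))) h; apply: hs; apply/h.
- move=> X [_ nc]; apply: contrapT => H; apply: nc => f _.
  split => [hp|]; last exact: su_qn hI.
  by apply: contrapT => hs; apply: H; exact: lb3 hI hp hs.
- move=> F hF; have [f [hp hs]] := ub3 R I F hI hF.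
  exists (discrete_topology (sigF F)); last exact: card_sigF.
  split; first exact: disc_normal.
  by move=> /(_ f (fun n => @disc_cont _ _ (f n))) h; apply: hs; apply/h.
Qed.
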